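(* Let $\mathbb{X},\mathbb{Y}$ be finite-dimensional real polyhedral Banach spaces with $\min\{\dim\mathbb{X},\dim\mathbb{Y}\}>1$. Then no rank $1$ operator lies in the relative interior of any edge of the unit ball of $\mathbb{L}(\mathbb{X},\mathbb{Y})$.
   Context: Polyhedral: the closed unit ball has finitely many extreme points; $\mathbb{L}(\mathbb{X},\mathbb{Y})$ carries the operator norm. A convex subset $F$ of the unit sphere is a face of the unit ball if whenever $x_1,x_2$ are unit vectors and $(1-t)x_1+tx_2\in F$ for some $0<t<1$, then $x_1,x_2\in F$; its dimension is $\dim\operatorname{span}\{v-w:v,w\in F\}$. An edge is a face of dimension $1$. *)

(* Defs.v *)
From HB Require Import structures.
From mathcomp Require Import all_boot all_order all_algebra.
From mathcomp Require Import all_classical all_reals.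
Set Implicit Arguments. Unset Strict Implicit. Unset Printing Implicit Defensive.
Import Order.TTheory GRing.Theory Num.Theory.
Local Open Scope classical_set_scope.
Local Open Scope ring_scope.

Section Defs.
Variable R : realType.

Definition is_norm (V : lmodType R) (N : V -> R) : Prop :=
  [/\ forall x, 0 <= N x,
      forall x, N x = 0 -> x = 0,
      forall (a : R) x, N (a *: x) = `|a| * N x
    & forall x y, N (x + y) <= N x + N y].

Definition unit_ball (V : lmodType R) (N : V -> R) : set V := [set x | N x <= 1].

Definition extreme_point (V : lmodType R) (N : V -> R) (x : V) : Prop :=
  N x <= 1 /\
  forall (y z : V) (t : R), N y <= 1 -> N z <= 1 -> 0 < t < 1 ->
    x = (1 - t) *: y + t *: z -> y = z.

Definition polyhedral (V : lmodType R) (N : V -> R) : Prop :=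
  finite_set [set x | extreme_point N x].

Definition convex_set (V : lmodType R) (F : set V) : Prop :=
  forall x y (t : R), F x -> F y -> 0 <= t <= 1 -> F ((1 - t) *: x + t *: y).

Definition is_face (V : lmodType R) (N : V -> R) (F : set V) : Prop :=
  [/\ convex_set F,
      F `<=` [set x | N x = 1]
    & forall x1 x2 (t : R), N x1 = 1 -> N x2 = 1 -> 0 < t < 1 ->
        F ((1 - t) *: x1 + t *: x2) -> F x1 /\ F x2].

Definition is_span_diff (V : vectType R) (F : set V) (U : {vspace V}) : Prop :=
  (forall v w, F v -> F w -> v - w \in U) /\
  (forall W : {vspace V}, (forall v w, F v -> F w -> v - w \in W) -> (U <= W)%VS).

Definition face_dim (V : vectType R) (F : set V) (k : nat) : Prop :=
  exists U : {vspace V}, is_span_diff F U /\ \dim U = k.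

Definition is_edge (V : vectType R) (N : V -> R) (F : set V) : Prop :=
  is_face N F /\ face_dim F 1.

(* relative interior of F (interior within its affine hull), w.r.t. the norm N *)
Definition rel_interior (V : vectType R) (N : V -> R) (F : set V) : set V :=
  [set T | F T /\ exists U : {vspace V}, is_span_diff F U /\
     exists2 e : R, 0 < e & forall u, u \in U -> N u < e -> F (T + u)].

(* operator norm of T : 'M_(n,m), acting as x |-> x *m T from (R^n,NX) to (R^m,NY) *)
Definition opnorm (n m : nat) (NX : 'rV[R]_n -> R) (NY : 'rV[R]_m -> R)
  (T : 'M[R]_(n, m)) : R :=
  sup [set NY (x *m T) | x in [set x | NX x <= 1]].

End Defs.

(* Main.v *)
Require Import Defs.
From HB Require Import structures.
From mathcomp Require Import all_boot all_order all_algebra.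
From mathcomp Require Import all_classical all_reals all_analysis.
From mathcomp Require Import ring lra.
Import Order.TTheory GRing.Theory Num.Theory.
Import numFieldNormedType.Exports.
Import Num.Def.
Local Open Scope classical_set_scope.
Local Open Scope ring_scope.

Section Aux.
Variable R : realType.
Lemma lip_cont n (g : 'rV[R]_n -> R) (L : R) : 0 <= L ->
  (forall x y, `|g x - g y| <= L * `|x - y|) -> continuous g.
Proof.
move=> L0 h x s /= /(nbhs_ballP (g x)) [e e0 es].
apply/nbhs_ballP; exists (e / (L + 1)); first by rewrite /= divr_gt0 // ltr_wpDl.
move=> y; rewrite -ball_normE /= => xy.
apply: es; rewrite -ball_normE /=.
apply: (le_lt_trans (h x y)).
have L1 : 0 < L + 1 by rewrite ltr_wpDl.
rewrite (@le_lt_trans _ _ ((L + 1) * `|x - y|)) //.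
  by rewrite ler_wpM2r // lerDl.
by rewrite -ltr_pdivlMl // mulrC.
Qed.

Lemma coord_le_norm n (x : 'rV[R]_n) i : `|x 0 i| <= `|x|.
Proof.
rewrite [leRHS]/normr /= mx_normrE; apply/bigmax_geP; right => /=.
by exists (ord0, i).
Qed.

Lemma norm_sum (V : lmodType R) (N : V -> R) I (r : seq I) (F : I -> V) :
  is_norm N -> N (\sum_(i <- r) F i) <= \sum_(i <- r) N (F i).
Proof.
case=> N0 Neq NZ ND.
elim: r => [|a r IH]; first by rewrite !big_nil -(scale0r 0) NZ normr0 mul0r.
by rewrite !big_cons (le_trans (ND _ _)) // lerD2l.
Qed.

Lemma norm_mul_bound n k (N : 'rV[R]_k -> R) (x : 'rV[R]_n) (M : 'M[R]_(n,k)) :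
  is_norm N -> N (x *m M) <= `|x| * \sum_i N (row i M).
Proof.
move=> hN; have [N0 _ NZ _] := hN.
rewrite mulmx_sum_row (le_trans (@norm_sum _ N _ _ _ hN)) // mulr_sumr.
apply: ler_sum => i _; rewrite NZ ler_wpM2r //; exact: coord_le_norm.
Qed.

Lemma norm_lip (V : lmodType R) (N : V -> R) x y : is_norm N ->
  `|N x - N y| <= N (x - y).
Proof.
case=> N0 Neq NZ ND.
have h1 : N x <= N (x - y) + N y by rewrite (le_trans _ (ND _ _)) // subrK.
have h2 : N y <= N (x - y) + N x.
  have -> : N (x - y) = N (y - x) by rewrite -opprB -(scaleN1r (y - x)) NZ normrN normr1 mul1r.
  by rewrite (le_trans _ (ND _ _)) // subrK.
by rewrite ler_norml; apply/andP; split; lra.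
Qed.

Lemma norm_upper n (N : 'rV[R]_n -> R) : is_norm N ->
  exists2 L, 0 <= L & forall x, N x <= L * `|x|.
Proof.
move=> hN; have [N0 _ _ _] := hN.
exists (\sum_i N (row i (1%:M : 'M[R]_n))); first by apply: sumr_ge0.
by move=> x; rewrite mulrC -{1}(mulmx1 x); apply: norm_mul_bound.
Qed.

Lemma norm_cont n (N : 'rV[R]_n -> R) : is_norm N -> continuous N.
Proof.
move=> hN; have [L L0 hL] := @norm_upper n N hN.
apply: (@lip_cont n N L L0) => x y; exact: le_trans (@norm_lip _ N x y hN) (hL _).
Qed.

Lemma norm_lower n (N : 'rV[R]_n -> R) : (0 < n)%N -> is_norm N ->
  exists2 C, 0 < C & forall x, `|x| <= C * N x.
Proof.
move=> n0 hN; have [N0 Neq NZ ND] := hN.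
pose S := [set x : 'rV[R]_n | `|x| = 1].
have S0 : S !=set0.
  pose x1 : 'rV[R]_n := const_mx 1.
  have x10 : x1 != 0.
    apply/negP => /eqP/matrixP/(_ 0 (Ordinal n0)); rewrite !mxE => /eqP.
    by rewrite oner_eq0.
  exists (`|x1|^-1 *: x1); rewrite /S /= normrZV //.
  by rewrite unitfE normr_eq0.
have cS : compact S.
  apply: bounded_closed_compact.
    rewrite /= /bounded_near; near=> M => x /= ->.
    by near: M; apply: nbhs_pinfty_ge; rewrite num_real.
  apply: (@preimage_closed _ _ (@normr _ 'rV[R]_n) [set 1]).
    by move=> x _; exact: norm_continuous.
  exact: closed_eq.
have cN : {within S, continuous N}.
  by apply: continuous_subspaceT; exact: (@norm_cont n N hN).
have [c cS' cmin] := EVT_min_rV S0 cS cN.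
move: cS'; rewrite inE /S /= => c1.
have Nc : 0 < N c.
  rewrite lt_neqAle N0 andbT; apply/negP => /eqP/esym/Neq c0.
  by move: c1; rewrite c0 normr0 => /eqP; rewrite eq_sym oner_eq0.
exists (N c)^-1; first by rewrite invr_gt0.
move=> x; have [->|x0] := eqVneq x 0; first by rewrite normr0 mulr_ge0 ?invr_ge0 ?N0 // ltW.
have nx : 0 < `|x| by rewrite normr_gt0.
have := cmin (`|x|^-1 *: x); rewrite inE /S /= normrZV ?unitfE ?normr_eq0 //.
move=> /(_ erefl); rewrite NZ ger0_norm; last by rewrite invr_ge0 ltW.
move=> h.
have h2 : N c * `|x| <= N x.
  have := ler_wpM2r (ltW nx) h.
  by rewrite [X in _ <= X -> _]mulrC mulrA mulfV ?mul1r // gt_eqF.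
by rewrite ler_pdivlMl.
Unshelve. all: by end_near. Qed.


Arguments norm_lower {n N}.
Arguments norm_cont {n N}.
Arguments coord_le_norm {n}.

Definition lf n (l : 'cV[R]_n) (x : 'rV[R]_n) : R := \sum_i x 0 i * l i 0.

Arguments lf {n} l x.

Lemma lfE n (l : 'cV[R]_n) x : lf l x = (x *m l) 0 0.
Proof. by rewrite /lf mxE. Qed.

Lemma lf_aff n (l : 'cV[R]_n) a b t :
  lf l ((1 - t) *: a + t *: b) = (1 - t) * lf l a + t * lf l b.
Proof.
rewrite /lf !mulr_sumr -big_split; apply: eq_bigr => i _; rewrite !mxE.
by rewrite mulrDl !mulrA.
Qed.

Lemma lf_cont n (l : 'cV[R]_n) : continuous (lf l).
Proof.
apply: (@lip_cont n (lf l) (\sum_i `|l i 0|)); first by apply: sumr_ge0.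
move=> x y; rewrite /lf -sumrB mulr_suml.
apply: (le_trans (ler_norm_sum _ _ _)); apply: ler_sum => i _.
rewrite -mulrBl normrM mulrC ler_wpM2l //.
by have := coord_le_norm (x - y) i; rewrite !mxE.
Qed.

Fixpoint allp (T : Type) (P : T -> Prop) (s : seq T) : Prop :=
  if s is a :: s' then P a /\ allp T P s' else True.
Arguments allp {T} P s.

Lemma allp_map (T U : Type) (P : U -> Prop) (g : T -> U) s :
  (forall i, P (g i)) -> allp P (map g s).
Proof. by move=> h; elim: s => //= a s ->; split. Qed.

Lemma allp_mapE (T : eqType) (U : Type) (P : U -> Prop) (g : T -> U) s :
  allp P (map g s) -> forall i, i \in s -> P (g i).
Proof.
elim: s => //= a s IH [Pa Ps] i; rewrite in_cons => /orP[/eqP->|]//.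
exact: IH.
Qed.

Section KM.
Variables (n : nat) (N : 'rV[R]_n -> R).
Hypotheses (n0 : (0 < n)%N) (hN : is_norm N).

Fixpoint lexmax (C : set 'rV[R]_n) (fs : seq ('rV[R]_n -> R)) : set 'rV[R]_n :=
  if fs is f :: fs' then lexmax [set x | C x /\ forall y, C y -> f y <= f x] fs'
  else C.

Lemma lexmax_sub fs C : lexmax C fs `<=` C.
Proof.
elim: fs C => [|f fs IH] C x //=.
by move=> /(IH _ x) [].
Qed.

Lemma lexmax_ex fs C : allp (fun f => continuous f) fs -> closed C ->
  C `<=` [set x | N x <= 1] -> C !=set0 -> exists p, lexmax C fs p.
Proof.
have [K K0 hK] := norm_lower n0 hN.
elim: fs C => [|f fs IH] C /= hf cC sC [x0 Cx0]; first by exists x0.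
case: hf => cf hf.
have bC : compact C.
  apply: bounded_closed_compact => //.
  rewrite /= /bounded_near; near=> M => x /= /sC Nx.
  apply: (le_trans (hK x)); apply: (@le_trans _ _ K); first by rewrite ler_piMr // ltW.
  by near: M; apply: nbhs_pinfty_ge; rewrite num_real.
have cfC : {within C, continuous f} by apply: continuous_subspaceT.
have [c cC' cmax] := EVT_max_rV (ex_intro _ x0 Cx0) bC cfC.
have Cc : C c by move: cC'; rewrite inE.
apply: IH => //.
- have -> : [set x | C x /\ forall y, C y -> f y <= f x] = C `&` (f @^-1` [set f c]).
    apply/seteqP; split => x /=.
      move=> [Cx hx]; split => //; apply/eqP; rewrite eq_le hx // andbT.
      by apply: cmax; rewrite inE.
    move=> [Cx fx]; split => // y Cy; rewrite fx; apply: cmax; by rewrite inE.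
  apply: closedI => //; apply: preimage_closed; last exact: closed_eq.
  by move=> x _; exact: cf.
- by move=> x [/sC].
- exists c; split => // y Cy; apply: cmax; by rewrite inE.
Unshelve. all: by end_near. Qed.

Lemma lexmax_conv fs C a b t p :
  allp (fun f => forall a b t, f ((1 - t) *: a + t *: b) = (1 - t) * f a + t * f b) fs ->
  0 < t < 1 -> C a -> C b -> p = (1 - t) *: a + t *: b -> lexmax C fs p ->
  lexmax C fs a /\ lexmax C fs b.
Proof.
move=> + /andP[t0 t1] + + ->.
elim: fs C => [|f fs IH] C //= [af hf] Ca Cb hp.
have hp' := hp; rewrite /= in hp'.
have [_ pmax] := lexmax_sub _ _ _ hp'.
have fa := pmax a Ca; have fb := pmax b Cb.
move: fa fb; rewrite af => fa fb.
have ea : f a = (1 - t) * f a + t * f b by nra.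
have eb : f b = (1 - t) * f a + t * f b by nra.
apply: IH => //.
- by split => // y Cy; rewrite ea -af; exact: pmax.
- by split => // y Cy; rewrite eb -af; exact: pmax.
Qed.

Lemma lexmax_uniq fs C p q : lexmax C fs p -> lexmax C fs q ->
  allp (fun f => f p = f q) fs.
Proof.
elim: fs C => //= f fs IH C hp hq; split; last exact: IH hp hq.
have [Cp mp] := lexmax_sub _ _ _ hp; have [Cq mq] := lexmax_sub _ _ _ hq.
by apply/eqP; rewrite eq_le mp // mq.
Qed.

Lemma ext_max (l : 'cV[R]_n) : exists p, extreme_point N p /\
  forall x, N x <= 1 -> lf l x <= lf l p.
Proof.
pose fs := lf l :: [seq (fun x : 'rV[R]_n => x 0 i) | i <- enum 'I_n].
pose B := [set x : 'rV[R]_n | N x <= 1].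
have hN' := hN; case: hN' => N0 Neq NZ ND.
have cB : closed B.
  apply: (@preimage_closed _ _ N [set r : R | r <= 1]); last exact: closed_le.
  by move=> x _; exact: norm_cont.
have [p hp] : exists p, lexmax B fs p.
  apply: lexmax_ex => //.
  - split; first exact: lf_cont.
    apply: allp_map => i; exact: coord_continuous.
  - exists 0; rewrite /B /= -(scale0r 0) NZ normr0 mul0r ler01 //.
have hp' := hp; rewrite /= in hp'.
have [_ pmax] := lexmax_sub _ _ _ hp'.
exists p; split => //; split; first by have := lexmax_sub _ _ _ hp => /= -[[]].
move=> y z t Ny Nz t01 ep.
have haff : allp (fun f => forall a b t, f ((1 - t) *: a + t *: b) = (1 - t) * f a + t * f b) fs.
  split; first by move=> a b u; exact: lf_aff.
  apply: allp_map => i a b u; rewrite !mxE; ring.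
have [hy hz] := @lexmax_conv fs B y z t p haff t01 Ny Nz ep hp.
have := @lexmax_uniq fs B y z hy hz => /= -[_] /allp_mapE hc.
apply/rowP => i.
by apply: hc; rewrite mem_enum.
Qed.
Lemma km_bound (l : 'cV[R]_n) : (forall e, extreme_point N e -> lf l e <= 1) ->
  forall x, N x <= 1 -> lf l x <= 1.
Proof.
have [p [ep pmax]] := ext_max l => h x Nx; exact: le_trans (pmax x Nx) (h p ep).
Qed.

End KM.

Lemma lf_lin n (c g : 'cV[R]_n) u v x : lf (u *: c + v *: g) x = u * lf c x + v * lf g x.
Proof.
rewrite /lf !mulr_sumr -big_split; apply: eq_bigr => i _; rewrite !mxE mulrDr; congr (_ + _); ring.
Qed.

Lemma lfN n (c : 'cV[R]_n) x : lf c (- x) = - lf c x.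
Proof. rewrite /lf -sumrN; apply: eq_bigr => i _; rewrite !mxE; ring. Qed.

Lemma min_pos (T : eqType) (s : seq T) (P : T -> Prop) (f : T -> R) :
  (forall e, e \in s -> P e -> 0 < f e) ->
  exists2 d, 0 < d & forall e, e \in s -> P e -> d <= f e.
Proof.
elim: s => [|a s IH] h; first by exists 1.
have [d d0 hd] : exists2 d, 0 < d & forall e, e \in s -> P e -> d <= f e.
  by apply: IH => e es; apply: h; rewrite in_cons es orbT.
have [Pa|nPa] := pselect (P a).
  exists (Num.min d (f a)); first by rewrite lt_min d0 h ?mem_head.
  move=> e; rewrite in_cons => /orP[/eqP->|es] Pe; first by rewrite ge_min lexx orbT.
  by rewrite ge_min hd.
exists d => // e; rewrite in_cons => /orP[/eqP->|es] Pe //; exact: hd.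
Qed.

Lemma poly_P n (N : 'rV[R]_n -> R) (c g : 'cV[R]_n) : (0 < n)%N -> is_norm N ->
  polyhedral N -> (forall x, N x <= 1 -> `|lf c x| <= 1) ->
  (forall x, N x <= 1 -> lf c x = 1 -> lf g x = 0) ->
  exists2 d, 0 < d & forall x, N x <= 1 -> `|lf c x| + d * `|lf g x| <= 1.
Proof.
move=> n0 hN pN hc hg; have [N0 Neq NZ ND] := hN.
have [s hs] := (iffLR (finite_seqP _)) pN.
have hpos : forall e, e \in s -> `|lf c e| < 1 -> 0 < (1 - `|lf c e|) / (`|lf g e| + 1).
  by move=> e _ he; rewrite divr_gt0 // ?subr_gt0 // ltr_wpDl.
have [d d0 hd] := @min_pos _ s (fun e => `|lf c e| < 1)
   (fun e => (1 - `|lf c e|) / (`|lf g e| + 1)) hpos.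
have hE : forall e, extreme_point N e -> `|lf c e| + d * `|lf g e| <= 1.
  move=> e ee; have es : e \in s.
    have : [set x | extreme_point N x] e by exact: ee.
    by rewrite hs /=.
  have Ne : N e <= 1 by case: ee.
  have [lt1|] := ltP `|lf c e| 1.
    have := hd e es lt1; set q := `|lf g e|.
    have q0 : 0 <= q by rewrite /q normr_ge0.
    move=> dle; rewrite -lerBrDl.
    apply: (le_trans (ler_wpM2r q0 dle)).
    rewrite mulrAC ler_pdivrMr ?ltr_wpDl //.
    by apply: ler_wpM2l; [rewrite subr_ge0 ltW | rewrite lerDl].
  move=> ge1; have e1 : `|lf c e| = 1 by apply/eqP; rewrite eq_le ge1 hc.
  suff -> : lf g e = 0 by rewrite normr0 mulr0 addr0 e1.
  move: e1; have [ce0|ce0] := lerP 0 (lf c e).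
    by rewrite ger0_norm // => /hg; apply.
  rewrite ltr0_norm // => /eqP; rewrite -lfN => /eqP h.
  have Nme : N (- e) <= 1 by rewrite -scaleN1r NZ normrN normr1 mul1r.
  by have := hg _ Nme h; rewrite lfN => /eqP; rewrite oppr_eq0 => /eqP.
have H : forall u v, `|u| <= 1 -> `|v| <= 1 -> forall x, N x <= 1 ->
    lf (u *: c + (v * d) *: g) x <= 1.
  move=> u v u1 v1; apply: km_bound => // e ee; rewrite lf_lin.
  apply: le_trans (hE e ee).
  apply: le_trans (ler_norm _) _; apply: le_trans (ler_normD _ _) _.
  rewrite !normrM (ger0_norm (ltW d0)).
  apply: lerD; first by rewrite -[X in _ <= X]mul1r; apply: ler_wpM2r.
  rewrite -mulrA -[X in _ <= X]mul1r; apply: ler_wpM2r => //.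
  by rewrite mulr_ge0 // ltW.
exists d => // x Nx.
have := H (Num.sg (lf c x)) (Num.sg (lf g x)) _ _ x Nx.
rewrite lf_lin [`|lf c x|]normrEsg [`|lf g x|]normrEsg.
have -> : Num.sg (lf g x) * d * lf g x = d * (Num.sg (lf g x) * lf g x) by ring.
by apply; rewrite normr_sg; case: (_ != 0).
Qed.


Lemma lf_scale n (g : 'cV[R]_n) k x : lf (k *: g) x = k * lf g x.
Proof. by rewrite /lf mulr_sumr; apply: eq_bigr => i _; rewrite !mxE mulrCA. Qed.

Lemma lf_delta n (i : 'I_n) x : lf (delta_mx i 0) x = x 0 i.
Proof.
rewrite /lf (bigD1 i) //= big1 => [|j /negbTE ji]; rewrite !mxE ?eqxx ?ji /=.
  by rewrite mulr1 addr0.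
by rewrite mulr0.
Qed.

Lemma outerE n m (g : 'cV[R]_n) (w : 'rV[R]_m) x : x *m (g *m w) = lf g x *: w.
Proof. by rewrite mulmxA [x *m g]mx11_scalar mul_scalar_mx lfE. Qed.

Lemma outer_entry n m (g : 'cV[R]_n) (w : 'rV[R]_m) i j : (g *m w) i j = g i 0 * w 0 j.
Proof. by rewrite !mxE big_ord1. Qed.

Lemma rank1_decomp n m (T : 'M[R]_(n, m)) : \rank T = 1%N ->
  exists c : 'cV[R]_n, exists r : 'rV[R]_m, T = c *m r.
Proof.
move=> h; have := mulmx_base T.
move: (col_base T) (row_base T); rewrite h => C Rw <-.
by exists C, Rw.
Qed.

Lemma dim1_line (V : vectType R) (U : {vspace V}) E1 E2 : \dim U = 1%N ->
  E1 \in U -> E2 \in U -> E1 != 0 -> exists k, E2 = k *: E1.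
Proof.
move=> dU h1 h2 n1.
have eU : <[E1]>%VS = U.
  apply/eqP; rewrite eqEdim -memvE h1 /= dim_vline n1 dU //.
by apply/vlineP; rewrite eU.
Qed.

Lemma mid_comb (V : lmodType R) (T E : V) :
  (1 - 2^-1) *: (T + E) + 2^-1 *: (T - E) = T.
Proof.
have h : (1 - 2^-1 : R) = 2^-1 by field.
rewrite h -scalerDr addrACA subrr addr0 -mulr2n -(scaler_nat 2 T) scalerA mulVf.
  by rewrite scale1r.
by rewrite pnatr_eq0.
Qed.

Section Op.
Variables (n m : nat) (NX : 'rV[R]_n -> R) (NY : 'rV[R]_m -> R).
Hypotheses (n0 : (0 < n)%N) (hX : is_norm NX) (hY : is_norm NY).

Let Nop := opnorm NX NY.

Lemma op_hub S : has_ubound [set NY (x *m S) | x in [set x | NX x <= 1]].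
Proof.
have [C C0 hC] := norm_lower n0 hX; have [X0 _ _ _] := hX; have [Y0 _ _ _] := hY.
exists (C * \sum_i NY (row i S)) => _ [x Nx <-].
apply: (le_trans (@norm_mul_bound _ _ NY x S hY)); apply: ler_wpM2r.
  by apply: sumr_ge0.
by apply: (le_trans (hC x)); rewrite -[X in _ <= X]mulr1 ler_wpM2l // ltW.
Qed.

Lemma op_ub S x : NX x <= 1 -> NY (x *m S) <= Nop S.
Proof. by move=> Nx; apply: (ub_le_sup (op_hub S)); exists x. Qed.

Lemma op_le S b : (forall x, NX x <= 1 -> NY (x *m S) <= b) -> Nop S <= b.
Proof.
have [X0 _ XZ _] := hX.
move=> h; apply: ge_sup; last by move=> _ [x Nx <-]; exact: h.
exists (NY (0 *m S)), 0 => //=.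
by rewrite -(scale0r 0) XZ normr0 mul0r ler01.
Qed.

Lemma op_ge0 S : 0 <= Nop S.
Proof.
have [X0 _ XZ _] := hX; have [Y0 _ _ _] := hY.
apply: (le_trans (Y0 (0 *m S))); apply: op_ub.
by rewrite -(scale0r 0) XZ normr0 mul0r ler01.
Qed.

End Op.
Lemma caseA_bound m (NY : 'rV[R]_m -> R) r z0 a b : is_norm NY -> NY r = 1 ->
  (forall s, `|s| <= 1 -> NY (r + s *: z0) <= 1) -> `|a| <= 1 ->
  `|b| * (1 + NY z0) <= 1 -> NY (a *: r + b *: z0) <= 1.
Proof.
move=> hY Nr hz0 ha hb; have [Y0 _ YZ YD] := hY.
have nz0 := Y0 z0.
have [ba|ab] := lerP `|b| `|a|.
  have [a0|a0] := eqVneq a 0.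
    move: ba; rewrite a0 normr0 normr_le0 => /eqP ->.
    by rewrite !scale0r addr0 -(scale0r 0) YZ normr0 mul0r ler01.
  have -> : a *: r + b *: z0 = a *: (r + (b / a) *: z0).
    by rewrite scalerDr scalerA mulrCA mulfV // mulr1.
  rewrite YZ -[1]mul1r; apply: ler_pM => //; apply: hz0.
  by rewrite normf_div ler_pdivrMr ?mul1r // normr_gt0.
apply: le_trans (YD _ _) _; rewrite !YZ Nr mulr1.
by apply: le_trans _ hb; rewrite mulrDr mulr1 lerD2r ltW.
Qed.

End Aux.

Arguments lf {R n} l x.
Arguments lfE {R n} l x.
Arguments outerE {R n m} g w x.
Arguments outer_entry {R n m} g w i j.
Arguments lf_scale {R n} g k x.
Arguments lf_delta {R n} i x.
Arguments lf_lin {R n} c g u v x.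
Arguments mid_comb {R V} T E.
Arguments coord_le_norm {R n} x i.
Arguments norm_lower {R n N}.
Arguments poly_P {R n N} c g.
Arguments caseA_bound {R m NY} r z0 a b.

Theorem mainTheorem17 (R : realType) (n m : nat)
  (NX : 'rV[R]_n -> R) (NY : 'rV[R]_m -> R) :
  (1 < n)%N -> (1 < m)%N ->
  is_norm NX -> is_norm NY -> polyhedral NX -> polyhedral NY ->
  forall (F : set 'M[R]_(n, m)), is_edge (opnorm NX NY) F ->
  forall T : 'M[R]_(n, m), rel_interior (opnorm NX NY) F T -> \rank T != 1%N.
Proof.
move=> hn hm hX hY pX pY F [[Fconv Fsph Fface] [U0 [[hU0a hU0b] dU0]]].
move=> T [FT [U [[hUa hUb] [e e0 he]]]].
have n0 : (0 < n)%N by apply: ltn_trans hn.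
set Nop := opnorm NX NY in Fsph Fface he *.
have [X0 Xeq XZ XD] := hX; have [Y0 Yeq YZ YD] := hY.
have ub : forall S x, NX x <= 1 -> NY (x *m S) <= Nop S := @op_ub R n m NX NY n0 hX hY.
have ople : forall S b, (forall x, NX x <= 1 -> NY (x *m S) <= b) -> Nop S <= b :=
  ltac:(exact: @op_le R n m NX NY hX).
have opge0 : forall S, 0 <= Nop S := @op_ge0 R n m NX NY n0 hX hY.
have dU : \dim U = 1%N.
  have -> : U = U0 by apply/eqP; rewrite eqEsubv hUb // hU0b.
  exact: dU0.
have T1 : Nop T = 1 := Fsph T FT.
have dir : forall E, Nop (T + E) <= 1 -> Nop (T - E) <= 1 -> E \in U.
  move=> E h1 h2.
  have hs : Nop T <= 2^-1 * Nop (T + E) + 2^-1 * Nop (T - E).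
    apply: ople => x Nx.
    rewrite -{1}(mid_comb T E) mulmxDr -!scalemxAr.
    apply: le_trans (YD _ _) _; rewrite !YZ.
    have h2g : 0 <= (1 - 2^-1 : R) by rewrite subr_ge0 invf_le1 ?ler1n.
    rewrite ger0_norm // ger0_norm ?invr_ge0 ?ler0n //.
    have -> : (1 - 2^-1 : R) = 2^-1 by field.
    by apply: lerD; apply: ler_wpM2l; rewrite ?invr_ge0 ?ler0n //; exact: ub.
  rewrite T1 in hs.
  have e1 : Nop (T + E) = 1 by apply/eqP; rewrite eq_le h1 /=; lra.
  have e2 : Nop (T - E) = 1 by apply/eqP; rewrite eq_le h2 /=; lra.
  have t01 : 0 < (2^-1 : R) < 1.
    by rewrite invr_gt0 ltr0n /= invf_lt1 ?ltr1n ?ltr0n.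
  have [FE _] := Fface _ _ _ e1 e2 t01 (eq_ind_r F FT (mid_comb T E)).
  by have := hUa _ _ FE FT; rewrite addrC addKr.
have dir' : forall E, (forall s, `|s| <= 1 -> Nop (T + s *: E) <= 1) -> E \in U.
  move=> E h; apply: dir; first by rewrite -[E]scale1r; apply: h; rewrite normr1.
  by rewrite -scaleN1r; apply: h; rewrite normrN normr1.
have dim1 := fun E1 E2 => @dim1_line R _ U E1 E2 dU.
have [D DU D0] : exists2 D, D \in U & D != 0.
  exists (vpick U); first exact: memv_pick.
  by rewrite vpick0; apply/eqP => U0'; move: dU; rewrite U0' dimv0.
apply/negP => /eqP hr.
have [c [r [eTcr Nr1]]] : exists c : 'cV[R]_n, exists r : 'rV[R]_m, T = c *m r /\ NY r = 1.
  have [c0 [r0 eT]] := @rank1_decomp R n m T hr.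
  have T0 : T != 0 by apply/eqP => T0; move: hr; rewrite T0 mxrank0.
  have r00 : r0 != 0 by apply: contraNneq T0 => h; rewrite eT h mulmx0.
  have rho0 : 0 < NY r0.
    rewrite lt_neqAle Y0 andbT; apply/eqP => /esym /Yeq h.
    by move: r00; rewrite h eqxx.
  exists (NY r0 *: c0), ((NY r0)^-1 *: r0); split.
    by rewrite eT -scalemxAl -scalemxAr scalerA mulfV ?gt_eqF // scale1r.
  by rewrite YZ ger0_norm ?invr_ge0 ?ltW // mulVf // gt_eqF.
have xT : forall x : 'rV[R]_n, x *m T = lf c x *: r by move=> x; rewrite eTcr outerE.
have hcb : forall x, NX x <= 1 -> `|lf c x| <= 1.
  by move=> x Nx; have := ub T x Nx; rewrite xT YZ Nr1 mulr1 T1.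
have [ext|next] := pselect (extreme_point NY r).
  have [[g [g0 hg]]|nog] := pselect (exists g : 'cV[R]_n, g != 0 /\
      forall x, NX x <= 1 -> lf c x = 1 -> lf g x = 0).
    have [d d0 hd] := poly_P c g n0 hX pX hcb hg.
    pose mu (j : 'I_m) := (NY (delta_mx (0 : 'I_1) j) + 1)^-1.
    have mu0 : forall j, 0 < mu j by move=> j; rewrite invr_gt0 ltr_wpDl ?Y0.
    pose w (j : 'I_m) : 'rV[R]_m := mu j *: delta_mx 0 j.
    have Nw : forall j, NY (w j) <= 1.
      move=> j; rewrite YZ ger0_norm ?(ltW (mu0 j)) // /mu.
      by rewrite mulrC -/(_ / _) ler_pdivrMr ?ltr_wpDl ?Y0 // mul1r lerDl.
    have went : forall jj l, w jj 0 l = mu jj * (l == jj)%:R.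
      by move=> jj l; rewrite /w !mxE.
    clearbody w.
    pose G (j : 'I_m) := (d *: g) *m w j.
    have GU : forall j, G j \in U.
      move=> j; apply: dir' => s s1; apply: ople => x Nx.
      rewrite mulmxDr -scalemxAr xT outerE lf_scale scalerA.
      apply: le_trans (YD _ _) _; rewrite !YZ Nr1 mulr1.
      apply: le_trans (hd x Nx); rewrite lerD2l.
      rewrite !normrM (ger0_norm (ltW d0)) -[X in _ <= X]mulr1.
      apply: ler_pM; rewrite ?mulr_ge0 ?Y0 ?(ltW d0) ?Nw //.
      by rewrite -[X in _ <= X]mul1r; apply: ler_wpM2r; rewrite ?mulr_ge0 ?(ltW d0).
    have [i hi] : exists i, g i 0 != 0.
      have [//|h] := pselect (exists i, g i 0 != 0).
      exfalso; apply: (negP g0); apply/eqP/colP => i.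
      have -> : (0 : 'cV[R]_n) i 0 = 0 by rewrite mxE.
      by apply/eqP/negPn/negP => hi; apply: h; exists i.
    pose j1 : 'I_m := Ordinal hm.
    have m0 : (0 < m)%N := ltn_trans (ltn0Sn 0) hm.
    pose j0 : 'I_m := Ordinal m0.
    have Gent : forall jj k l, G jj k l = d * g k 0 * (mu jj * (l == jj)%:R).
      by move=> jj k l; rewrite /G outer_entry went !mxE.
    clearbody G.
    have G0 : G j0 != 0.
      apply/negP => /eqP /matrixP /(_ i j0); rewrite Gent eqxx mulr1 [RHS]mxE => /eqP.
      by rewrite !mulf_eq0 gt_eqF //= (negbTE hi) /= gt_eqF.
    have [k hk] := dim1 (G j0) (G j1) (GU _) (GU _) G0.
    have := congr1 (fun M : 'M[R]_(n, m) => M i j1) hk; rewrite /= Gent mxE Gent eqxx.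
    have -> : (j1 == j0) = false by [].
    rewrite mulr0 mulr0 mulr0 mulr1 => /eqP; rewrite !mulf_eq0 gt_eqF //= (negbTE hi) /=.
    by rewrite gt_eqF.
  have opZ : forall a S, Nop (a *: S) <= `|a| * Nop S.
    move=> a S; apply: ople => x Nx; rewrite -scalemxAr YZ.
    by apply: ler_wpM2l => //; exact: ub.
  pose s := e / (2 * (Nop D + 1)).
  have ND1 : 0 < Nop D + 1 by rewrite ltr_wpDl.
  have s0 : 0 < s by rewrite divr_gt0 // mulr_gt0.
  have sN : s * Nop D < e.
    have -> : e = 2 * (s * (Nop D + 1)) by rewrite /s; field; rewrite gt_eqF.
    have := opge0 D; nra.
  have F1 : F (T + s *: D).
    apply: he; first by rewrite memvZ.
    by apply: le_lt_trans (opZ _ _) _; rewrite ger0_norm // ltW.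
  have F2 : F (T + (- s) *: D).
    apply: he; first by rewrite memvZ.
    by apply: le_lt_trans (opZ _ _) _; rewrite normrN ger0_norm // ltW.
  have N1 := Fsph _ F1; have N2 := Fsph _ F2.
  have xD0 : forall x, NX x <= 1 -> lf c x = 1 -> x *m D = 0.
    move=> x Nx hx.
    have e1 : x *m (T + s *: D) = x *m T + s *: (x *m D) by rewrite mulmxDr scalemxAr.
    have e2 : x *m (T + (- s) *: D) = x *m T - s *: (x *m D).
      by rewrite mulmxDr scaleNr mulmxN scalemxAr.
    have t01 : 0 < (2^-1 : R) < 1.
      by rewrite invr_gt0 ltr0n /= invf_lt1 ?ltr1n ?ltr0n.
    have h1 : NY (x *m (T + s *: D)) <= 1 by rewrite -N1; exact: ub.
    have h2 : NY (x *m (T + (- s) *: D)) <= 1 by rewrite -N2; exact: ub.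
    have := ext.2 _ _ _ h1 h2 t01.
    rewrite e1 e2 mid_comb xT hx scale1r => /(_ erefl).
    move/addrI => h.
    have : (s + s) *: (x *m D) = 0 by rewrite scalerDl {1}h addNr.
    move/eqP; rewrite scaler_eq0 => /orP [|/eqP //].
    by rewrite gt_eqF // addr_gt0.
  have colD : forall j, col j D = 0.
    move=> j; apply/eqP/negPn/negP => hj; apply: nog; exists (col j D); split => //.
    by move=> x Nx hx; rewrite lfE colE mulmxA xD0 // mul0mx mxE.
  apply: (negP D0); apply/eqP/matrixP => i j.
  have := congr1 (fun M : 'cV[R]_n => M i 0) (colD j); rewrite /= !mxE => ->.
  by [].
have : ~ (forall y z t, NY y <= 1 -> NY z <= 1 -> 0 < t < 1 ->
    r = (1 - t) *: y + t *: z -> y = z).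
  by move=> h; apply: next; split => //; rewrite Nr1.
move=> /existsNP [y /existsNP [z /existsNP [t]]].
move=> /not_implyP [Ny /not_implyP [Nz /not_implyP [t01 /not_implyP [er yz]]]].
have /andP [t0 t1] := t01.
pose eps := Num.min t (1 - t).
have eps0 : 0 < eps by rewrite lt_min t0 subr_gt0 t1.
have et : eps <= t by rewrite ge_min lexx.
have et' : eps <= 1 - t by rewrite ge_min lexx orbT.
pose z0 := eps *: (z - y).
have z0nz : z0 != 0.
  rewrite scaler_eq0 negb_or gt_eqF //=; apply/eqP => h; apply: yz.
  by apply/eqP; rewrite eq_sym -subr_eq0 h.
have hz0 : forall s, `|s| <= 1 -> NY (r + s *: z0) <= 1.
  move=> s s1.
  have se : `|s * eps| <= eps.
    by rewrite normrM (ger0_norm (ltW eps0)) -[X in _ <= X]mul1r ler_wpM2r // ltW.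
  move: se; set q := s * eps => se.
  have -> : r + s *: z0 = (1 - t - q) *: y + (t + q) *: z.
    by rewrite er /z0 /q; apply/matrixP => i j; rewrite !mxE; ring.
  move: se; rewrite ler_norml => /andP [q1 q2].
  apply: le_trans (YD _ _) _; rewrite !YZ !ger0_norm; [|lra|lra].
  have := Y0 y; have := Y0 z; nra.
clearbody z0.
have [C C0 hC] := norm_lower n0 hX.
have A0 : 0 < 1 + NY z0 by rewrite ltr_wpDr ?Y0.
pose kap := (C * (1 + NY z0))^-1.
have kap0 : 0 < kap by rewrite invr_gt0 mulr_gt0.
pose E (i : 'I_n) := (kap *: delta_mx i (0 : 'I_1)) *m z0.
have EU : forall i, E i \in U.
  move=> i; apply: dir' => s s1; apply: ople => x Nx.
  rewrite mulmxDr -scalemxAr xT outerE lf_scale lf_delta scalerA.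
  apply: (caseA_bound r z0 _ _ hY Nr1 hz0 (hcb x Nx)).
  have xi : `|x 0 i| <= C.
    apply: le_trans (coord_le_norm x i) _; apply: le_trans (hC x) _.
    by rewrite -[X in _ <= X]mulr1 ler_wpM2l // ltW.
  rewrite !normrM (ger0_norm (ltW kap0)).
  have -> : `|s| * (kap * `|x 0 i|) * (1 + NY z0) = (`|s| * `|x 0 i|) / C.
    by rewrite /kap; field; rewrite !gt_eqF.
  rewrite ler_pdivrMr // mul1r -[X in _ <= X]mul1r.
  by apply: ler_pM.
have [j hj] : exists j, z0 0 j != 0.
  have [//|h] := pselect (exists j, z0 0 j != 0).
  exfalso; apply: (negP z0nz); apply/eqP/rowP => j.
  have -> : (0 : 'rV[R]_m) 0 j = 0 by rewrite mxE.
  by apply/eqP/negPn/negP => hj; apply: h; exists j.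
pose i1 : 'I_n := Ordinal hn.
pose i0 : 'I_n := Ordinal n0.
have Eent : forall i k l, E i k l = kap * (k == i)%:R * z0 0 l.
  by move=> i k l; rewrite /E outer_entry !mxE andbT.
have E0 : E i0 != 0.
  apply/negP => /eqP /matrixP /(_ i0 j); rewrite Eent !mxE eqxx mulr1 => /eqP.
  by rewrite mulf_eq0 gt_eqF //= (negbTE hj).
have [k hk] := dim1 (E i0) (E i1) (EU _) (EU _) E0.
clearbody E.
have := congr1 (fun M : 'M[R]_(n, m) => M i1 j) hk; rewrite /= Eent mxE Eent eqxx.
have -> : (i1 == i0) = false by [].
rewrite mulr0 mul0r mulr0 mulr1 => /eqP; rewrite mulf_eq0 gt_eqF //=.
by rewrite (negbTE hj).
Qed.
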